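(* Let $p=(p_1,p_2,p_3)$, $q=(q_1,q_2,q_3)\in\mathbb Z^3$ with $\sum p_i=\sum q_i$, $p_1\le p_2\le p_3$, $q_1\le q_2\le q_3$, such that the $S^1_{p,q}$-action on $SU(3)$ is free and $q_2=p_1$ or $q_2=p_3$. Then, up to diffeomorphism of the quotient, the action is one of: (1) $p=(0,0,0)$, $q=(-1,0,1)$; (2) $p=(0,1,1)$, $q=(0,0,2)$.
   Context: $S^1_{p,q}$ acts on $SU(3)$ by $z\star A=\mathrm{diag}(z^{p_1},z^{p_2},z^{p_3})A\,\mathrm{diag}(\bar z^{q_1},\bar z^{q_2},\bar z^{q_3})$; it is free iff $\gcd(p_1-q_{\sigma(1)},p_2-q_{\sigma(2)})=1$ for all $\sigma\in S_3$. Quotients are considered up to the diffeomorphisms induced by permuting the $p_i$, permuting the $q_i$, swapping $p$ and $q$, adding a common integer to all $p_i,q_j$, and replacing $(p,q)$ by $((-p_3,-p_2,-p_1),(-q_3,-q_2,-q_1))$. *)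

(* Defs.v *)
From Stdlib Require Import ZArith Relations.
Open Scope Z_scope.

Record trip := mkT { t1 : Z; t2 : Z; t3 : Z }.

(* Freeness of the S^1_{p,q} action on SU(3):
   gcd(p1 - q_{s(1)}, p2 - q_{s(2)}) = 1 for all six permutations s of {1,2,3}. *)
Definition free_action (p q : trip) : Prop :=
  let pairs := (fun a b => Z.gcd (t1 p - a) (t2 p - b) = 1) in
  pairs (t1 q) (t2 q) /\ pairs (t1 q) (t3 q) /\
  pairs (t2 q) (t1 q) /\ pairs (t2 q) (t3 q) /\
  pairs (t3 q) (t1 q) /\ pairs (t3 q) (t2 q).

Definition swap12 (a : trip) : trip := mkT (t2 a) (t1 a) (t3 a).
Definition swap23 (a : trip) : trip := mkT (t1 a) (t3 a) (t2 a).
Definition shift (k : Z) (a : trip) : trip := mkT (t1 a + k) (t2 a + k) (t3 a + k).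
Definition negrev (a : trip) : trip := mkT (- t3 a) (- t2 a) (- t1 a).

(* One elementary move inducing a diffeomorphism of quotients.
   The transpositions (12),(23) generate all permutations of the entries. *)
Inductive move : trip * trip -> trip * trip -> Prop :=
  | mv_p12 p q : move (p, q) (swap12 p, q)
  | mv_p23 p q : move (p, q) (swap23 p, q)
  | mv_q12 p q : move (p, q) (p, swap12 q)
  | mv_q23 p q : move (p, q) (p, swap23 q)
  | mv_swap p q : move (p, q) (q, p)
  | mv_shift k p q : move (p, q) (shift k p, shift k q)
  | mv_negrev p q : move (p, q) (negrev p, negrev q).

Definition quot_equiv : trip * trip -> trip * trip -> Prop :=
  clos_refl_sym_trans _ move.

(* Main.v *)
Require Import Defs.
From Stdlib Require Import ZArith Relations Lia.
Open Scope Z_scope.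

Lemma shift_eq k (p q p' q' : trip) : p' = Defs.shift k p -> q' = Defs.shift k q ->
  quot_equiv (p, q) (p', q').
Proof. intros -> ->. apply rst_step. constructor. Qed.

Lemma negrev_eq (p q p' q' : trip) : p' = negrev p -> q' = negrev q ->
  quot_equiv (p, q) (p', q').
Proof. intros -> ->. apply rst_step. constructor. Qed.

Lemma gcd_neg x y : y = - x -> Z.gcd x y = 1 -> Z.abs x = 1.
Proof. intros -> H. rewrite Z.gcd_opp_r, Z.gcd_diag in H. exact H. Qed.

Lemma gcd_zero x y : x = 0 -> Z.gcd x y = 1 -> Z.abs y = 1.
Proof. intros -> H. rewrite Z.gcd_0_l in H. exact H. Qed.

Theorem mainTheorem3 (p q : trip) :
  t1 p + t2 p + t3 p = t1 q + t2 q + t3 q ->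
  t1 p <= t2 p <= t3 p ->
  t1 q <= t2 q <= t3 q ->
  free_action p q ->
  (t2 q = t1 p \/ t2 q = t3 p) ->
  quot_equiv (p, q) (mkT 0 0 0, mkT (-1) 0 1) \/
  quot_equiv (p, q) (mkT 0 1 1, mkT 0 0 2).
Proof.
  destruct p as [a1 a2 a3], q as [b1 b2 b3]; unfold free_action; simpl.
  intros Hs Hp Hq (F1 & F2 & F3 & F4 & F5 & F6) Hc.
  assert ((a1=a2 /\ a2=a3 /\ b1=a1-1 /\ b2=a1 /\ b3=a1+1) \/
          (a2=a1+1 /\ a3=a2 /\ b1=a1 /\ b2=a1 /\ b3=a1+2) \/
          (a1=a2 /\ a3=a1+1 /\ b1=a1-1 /\ b2=a3 /\ b3=a3)) as H.
  { destruct Hc as [Hc|Hc].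
    - apply gcd_zero in F3; [|lia]. apply gcd_zero in F4; [|lia]. lia.
    - apply gcd_neg in F2; [|lia]. apply gcd_neg in F5; [|lia]. lia. }
  destruct H as [(?&?&?&?&?)|[(?&?&?&?&?)|(?&?&?&?&?)]].
  - left. apply (shift_eq (-a1)); unfold Defs.shift; simpl; f_equal; lia.
  - right. apply (shift_eq (-a1)); unfold Defs.shift; simpl; f_equal; lia.
  - right. eapply rst_trans. apply negrev_eq; reflexivity.
    apply (shift_eq (a1+1)); unfold Defs.shift, negrev; simpl; f_equal; lia.
Qed.
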